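(* Let $m,n\ge 3$ and let $e$ be any hyperedge of $\mathcal{C}^3_{m,n}$. Then $\mathcal{C}^3_{m,n}-e$ has exactly one negative Seidel eigenvalue, and all its remaining Seidel eigenvalues are positive.
   Context: For a hypergraph $\mathcal{H}$ and distinct vertices $i,j$, the co-degree $c_{ij}$ is the number of hyperedges containing both $i$ and $j$. The Seidel matrix $\mathcal{S}(\mathcal{H})$ has zero diagonal and $(i,j)$-entry $1-2c_{ij}$ for $i\neq j$; its eigenvalues (with multiplicity) are the Seidel eigenvalues of $\mathcal{H}$. The complete $3$-uniform bipartite hypergraph $\mathcal{C}^3_{m,n}=(V_1,V_2,E)$ has vertex set $V_1\sqcup V_2$, $|V_1|=m$, $|V_2|=n$, and $E$ = all $3$-subsets meeting both $V_1$ and $V_2$. For a hyperedge $e$, $\mathcal{H}-e$ denotes the hypergraph with the same vertex set and hyperedge set $E\setminus\{e\}$. *)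

(* Defs.v *)
From HB Require Import structures.
From mathcomp Require Import all_boot all_order all_algebra.
Set Implicit Arguments. Unset Strict Implicit. Unset Printing Implicit Defensive.
Import Order.TTheory GRing.Theory Num.Theory.

(* Vertex set V1 ⊔ V2 is 'I_(m+n); V1 = {i | i < m}, V2 = {i | m <= i}. *)
Definition in_V1 (m n : nat) (i : 'I_(m + n)) : bool := (i < m)%N.

Definition C3 (m n : nat) : {set {set 'I_(m + n)}} :=
  [set f : {set 'I_(m + n)} | [&& #|f| == 3%N,
      [exists x in f, in_V1 x] & [exists x in f, ~~ in_V1 x]]].

Definition codeg (N : nat) (E : {set {set 'I_N}}) (i j : 'I_N) : nat :=
  #|[set f in E | (i \in f) && (j \in f)]|.

Definition seidel (R : nzRingType) (N : nat) (E : {set {set 'I_N}}) : 'M[R]_N :=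
  \matrix_(i, j) (if i == j then 0 else 1 - 2 * (codeg E i j)%:R)%R.

(* Main.v *)
Require Import Defs.
From HB Require Import structures.
From mathcomp Require Import all_boot all_order all_algebra.
From mathcomp Require Import zify ring lra complex.
Import Order.TTheory GRing.Theory Num.Theory.
Set Implicit Arguments. Unset Strict Implicit.
Local Open Scope ring_scope.


Lemma card_V1 m n : #|[set k : 'I_(m + n) | in_V1 k]| = m.
Proof.
have -> : [set k : 'I_(m + n) | in_V1 k] = [set lshift n k | k : 'I_m].
  apply/setP => k; rewrite !inE /in_V1; apply/idP/imsetP.
    by move=> hk; exists (Ordinal hk) => //; apply/val_inj.
  by case=> x _ ->; rewrite /= ltn_ord.
by rewrite card_imset ?card_ord //; apply: lshift_inj.
Qed.

Lemma card_V2 m n : #|[set k : 'I_(m + n) | ~~ in_V1 k]| = n.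
Proof.
have := cardsC [set k : 'I_(m + n) | in_V1 k].
rewrite card_V1 card_ord.
have -> : ~: [set k : 'I_(m + n) | in_V1 k] = [set k | ~~ in_V1 k].
  by apply/setP => k; rewrite !inE.
by move/eqP; rewrite eqn_add2l => /eqP.
Qed.


Definition base m n (i j : 'I_(m + n)) : nat :=
  if in_V1 i && in_V1 j then n else if ~~ in_V1 i && ~~ in_V1 j then m
  else (m + n - 2)%N.

Definition Kset m n (i j : 'I_(m + n)) :=
  [set k | [&& k != i, k != j,
     in_V1 i || in_V1 j || in_V1 k & ~~ in_V1 i || ~~ in_V1 j || ~~ in_V1 k]].

Lemma card_Kset m n (i j : 'I_(m + n)) : i != j -> #|Kset i j| = base i j.
Proof.
move=> ij; rewrite /base /Kset.
case Hi: (in_V1 i); case Hj: (in_V1 j) => /=.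
- apply: eq_trans (card_V2 m n); apply: eq_card => k; rewrite !inE.
  case Hk: (in_V1 k); rewrite ?andbF ?andbT //=.
  by apply/andP; split; apply/negP => /eqP E; subst k; rewrite ?Hi ?Hj in Hk.
- have H := cardsC [set i; j]; rewrite cards2 ij card_ord in H.
  have -> : (m + n - 2 = #|~: [set i; j]|)%N by lia.
  apply: eq_card => k; rewrite !inE.
  by rewrite !andbT negb_or.
- have H := cardsC [set i; j]; rewrite cards2 ij card_ord in H.
  have -> : (m + n - 2 = #|~: [set i; j]|)%N by lia.
  apply: eq_card => k; rewrite !inE.
  by rewrite !andbT negb_or ?orbT.
- apply: eq_trans (card_V1 m n); apply: eq_card => k; rewrite !inE.
  case Hk: (in_V1 k); rewrite ?andbF ?andbT //=.
  by apply/andP; split; apply/negP => /eqP E; subst k; rewrite ?Hi ?Hj in Hk.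
Qed.

Lemma card_S m n (i j : 'I_(m + n)) : i != j ->
  #|[set f in C3 m n | (i \in f) && (j \in f)]| = base i j.
Proof.
move=> ij; rewrite -card_Kset //.
have inj : {in Kset i j &, injective (fun k => [set i; j; k])}.
  move=> k k'; rewrite !inE => /and3P[ki kj _] /and3P[k'i k'j _] E.
  have : k \in [set i; j; k'] by rewrite -E !inE eqxx !orbT.
  by rewrite !inE (negbTE ki) (negbTE kj) => /eqP.
rewrite -(card_in_imset inj); apply: eq_card => f; rewrite !inE.
apply/idP/imsetP.
- case/andP => /and3P[f3 /existsP[x /andP[xf xV]] /existsP[y /andP[yf yV]]].
  case/andP => fi fj.
  have sub : [set i; j] \subset f by apply/subsetP => z; rewrite !inE => /orP[]/eqP->.
  have : #|f :\: [set i; j]| == 1%N by rewrite cardsDS // cards2 ij (eqP f3).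
  case/cards1P => k Ek.
  have kf : k \in f :\: [set i; j] by rewrite Ek inE.
  have Ef : f = [set i; j; k].
    apply/setP => z; apply/idP/idP.
    - move=> zf; rewrite !inE; have [zij|zij] := boolP (z \in [set i; j]).
      + by move: zij; rewrite !inE => /orP[]->; rewrite ?orbT.
      + have : z \in f :\: [set i; j] by rewrite inE zij zf.
        by rewrite Ek inE => ->; rewrite !orbT.
    - rewrite !inE => /orP[/orP[/eqP->|/eqP->]|/eqP->]; rewrite ?fi ?fj //.
      by move: kf; rewrite inE => /andP[].
  exists k => //.
  move: kf; rewrite !inE negb_or => /andP[/andP[ki kj] _]; rewrite ki kj /=.
  move: xf yf; rewrite Ef !inE => /orP[/orP[]|]/eqP Ex /orP[/orP[]|]/eqP Ey; subst x y;
    by move: xV yV; case: (in_V1 i); case: (in_V1 j); case: (in_V1 k).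
- case=> k; rewrite inE => /and3P[ki kj /andP[c1 c2]] ->.
  rewrite !inE !eqxx ?orbT /= ?andbT.
  apply/and3P; split.
  + by rewrite setUC cardsU1 cards2 !inE negb_or ki kj ij.
  + case/orP: c1 => [/orP[]|] h; apply/existsP; [exists i | exists j | exists k];
    by rewrite !inE eqxx ?orbT.
  + case/orP: c2 => [/orP[]|] h; apply/existsP; [exists i | exists j | exists k];
    by rewrite !inE eqxx ?orbT.
Qed.

Lemma codeg_eq m n (e : {set 'I_(m + n)}) i j : e \in C3 m n -> i != j ->
  (codeg (C3 m n :\ e) i j + ((i \in e) && (j \in e)) = base i j)%N.
Proof.
move=> he ij; rewrite /codeg -card_S // (cardsD1 e [set f in C3 m n | _]) addnC.
congr (_ + _); first by rewrite inE he.
apply: eq_card => f; rewrite !inE.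
by case: (f == e); case: (f \in C3 m n).
Qed.

Section Sec3.
Local Open Scope sesquilinear_scope.

Lemma sp_one_neg (C : numClosedFieldType) N (A : 'M[C]_N) (w : 'rV[C]_N) :
  (1 < N)%N -> A \is hermsymmx -> \tr A = 0 ->
  (forall v : 'rV[C]_N, v != 0 -> (v *m w^T) 0 0 = 0 ->
      0 < (v *m A *m v ^t*) 0 0) ->
  exists i0, spectral_diag A 0 i0 < 0 /\
    (forall i, i != i0 -> 0 < spectral_diag A 0 i).
Proof.
move=> N1 hA trA H2.
set P := spectralmx A; set D := spectral_diag A.
have Pu : P \is unitarymx := spectral_unitarymx A.
have PPt : P *m P ^t* = 1%:M by apply/unitarymxP.
have iP : invmx P = P ^t* := invmx_unitary Pu.
have eA : A = P ^t* *m diag_mx D *m P.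
  by rewrite -iP; apply/orthomx_spectralP/hermitian_normalmx.
have Dreal : forall i, D 0 i \is Num.real.
  by move=> i; have /mxOverP := hermitian_spectral_diag_real hA; apply.
have qf : forall y : 'rV_N,
    ((y *m P) *m A *m (y *m P) ^t*) 0 0 = \sum_i D 0 i * (y 0 i * (y 0 i)^*).
  move=> y; have -> : (y *m P) ^t* = P ^t* *m y ^t* by rewrite trmx_mul map_mxM.
  rewrite eA !mulmxA -(mulmxA y P) PPt mulmx1 -(mulmxA _ P) PPt mulmx1.
  rewrite mxE; apply: eq_bigr => i _; rewrite mul_mx_diag !mxE.
  by rewrite [y 0 i * _]mulrC mulrA.
have trD : \sum_i D 0 i = 0.
  rewrite -mxtrace_diag -trA eA -mulmxA mxtrace_mulC -mulmxA PPt mulmx1 //.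
have atmost : forall i j, i != j -> D 0 i <= 0 -> D 0 j <= 0 -> False.
  move=> i j ij Di Dj.
  pose r (k : 'I_N) := (((delta_mx 0 k : 'rV[C]_N) *m P) *m w^T) 0 0.
  pose y : 'rV[C]_N := if (r i == 0) && (r j == 0) then delta_mx 0 i
                       else r j *: delta_mx 0 i - r i *: delta_mx 0 j.
  have yk : forall k, k != i -> k != j -> y 0 k = 0.
    move=> k ki kj; rewrite /y; case: ifP => _; rewrite !mxE.
      by rewrite (negbTE ki) andbF.
    by rewrite (negbTE ki) (negbTE kj) !andbF !mulr0 subrr.
  have yn0 : y != 0.
    rewrite /y; case: ifPn => h.
      apply/eqP => /matrixP /(_ 0 i); rewrite !mxE !eqxx /= => /eqP.
      by rewrite oner_eq0.
    rewrite negb_and in h.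
    apply/eqP => /matrixP y0; case/orP: h => h.
      move: (y0 0 j); rewrite !mxE !eqxx eq_sym (negbTE ij) /= mulr1 mulr0 sub0r.
      by move/eqP; rewrite oppr_eq0 (negbTE h).
    move: (y0 0 i); rewrite !mxE !eqxx (negbTE ij) /= mulr1 mulr0 subr0.
    by move/eqP; rewrite (negbTE h).
  have vn0 : y *m P != 0.
    apply: contra yn0 => /eqP v0.
    by rewrite -(mulmx1 y) -PPt mulmxA v0 mul0mx.
  have orth : (y *m P *m w^T) 0 0 = 0.
    rewrite /y; case: ifPn => h.
      by case/andP: h => /eqP.
    rewrite !mulmxBl -!scalemxAl !mxE -/(r i) -/(r j).
    by rewrite /r !mxE mulrC subrr.
  have pos := H2 _ vn0 orth; rewrite qf in pos.
  suff le : \sum_i D 0 i * (y 0 i * (y 0 i)^*) <= 0.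
    by have := lt_le_trans pos le; rewrite ltxx.
  apply: sumr_le0 => k _.
  have [->|ki] := eqVneq k i; first by apply: mulr_le0_ge0 => //; apply: mul_conjC_ge0.
  have [->|kj] := eqVneq k j; first by apply: mulr_le0_ge0 => //; apply: mul_conjC_ge0.
  by rewrite yk // mul0r mulr0.
case: (boolP [exists i, D 0 i < 0]).
  case/existsP => i0 hi0; exists i0; split => // i ii0.
  rewrite real_ltNge ?real0 //; apply/negP => hi.
  exact: (atmost i i0 ii0 hi (ltW hi0)).
rewrite negb_exists => /forallP hall.
have ge : forall i, 0 <= D 0 i.
  by move=> i; rewrite real_leNgt ?real0 //; apply: hall.
have D0 : forall i, D 0 i = 0.
  by move=> i; apply: (psumr_eq0P (P := predT) (fun i _ => ge i) trD).
have i1 : (0 < N)%N by apply: ltn_trans N1.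
exfalso; apply: (atmost (Ordinal i1) (Ordinal N1)) => //.
  by rewrite D0.
by rewrite D0.
Qed.

End Sec3.


Lemma char_poly_similar (F : comUnitRingType) n (P M : 'M[F]_n) :
  P \in unitmx -> char_poly (invmx P *m M *m P) = char_poly M.
Proof.
move=> Pu; rewrite /char_poly /char_poly_mx.
set Q := map_mx polyC (invmx P); set Pp := map_mx polyC P.
have QP : Q *m Pp = 1%:M by rewrite -map_mxM mulVmx // map_mx1.
have -> : 'X%:M - map_mx polyC (invmx P *m M *m P)
          = Q *m ('X%:M - map_mx polyC M) *m Pp.
  rewrite !map_mxM mulmxBr mulmxBl -/Q -/Pp; congr (_ - _).
  by rewrite scalar_mxC -mulmxA QP mulmx1.
rewrite !det_mulmx mulrC mulrA -det_mulmx.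
by rewrite [Pp *m Q]mulmx1C // det1 mul1r.
Qed.

Section Sec5.
Local Open Scope sesquilinear_scope.

Section QF.
Variables (C : numClosedFieldType) (N : nat).
Implicit Types (v p q : 'rV[C]_N) (M : 'M[C]_N).

Definition qf v M := (v *m M *m v ^t*) 0 0.

Lemma qfD v M1 M2 : qf v (M1 + M2) = qf v M1 + qf v M2.
Proof. by rewrite /qf mulmxDr mulmxDl mxE. Qed.

Lemma qfZ v a M : qf v (a *: M) = a * qf v M.
Proof. by rewrite /qf -scalemxAr -scalemxAl mxE. Qed.

Lemma qfJ v p q : qf v (p^T *m q) = (v *m p^T) 0 0 * (q *m v ^t*) 0 0.
Proof.
by rewrite /qf !mulmxA -(mulmxA (v *m p^T)) mxE big_ord1.
Qed.

Lemma qfdiag v (D : 'rV[C]_N) :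
  qf v (diag_mx D) = \sum_k D 0 k * (v 0 k * (v 0 k)^*).
Proof.
rewrite /qf mxE; apply: eq_bigr => i _; rewrite mul_mx_diag !mxE.
by rewrite mulrAC mulrC.
Qed.

Lemma real_conj v p : (forall k, p 0 k \is Num.real) ->
  (p *m v ^t*) 0 0 = ((v *m p^T) 0 0)^*.
Proof.
move=> pr; rewrite !mxE rmorph_sum; apply: eq_bigr => k _.
by rewrite !mxE rmorphM /= (conj_Creal (pr k)) mulrC.
Qed.

End QF.

Lemma qf_pos (C : numClosedFieldType) N (M : 'M[C]_N) (f g u d : 'I_N -> C)
    (a b c : C) :
  a \is Num.real -> c \is Num.real ->
  (forall k, f k \is Num.real) -> (forall k, g k \is Num.real) ->
  (forall k, u k \is Num.real) ->
  a < 0 -> a * b <= c ^+ 2 -> (forall k, 0 < d k) ->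
  (forall k l, M k l = a * (f k * f l) + b * (g k * g l)
     + c * (f k * g l + g k * f l) + 2 * (u k * u l) + (k == l)%:R * d k) ->
  forall v : 'rV[C]_N, v != 0 ->
    (v *m (\row_k (a * f k + c * g k))^T) 0 0 = 0 -> 0 < qf v M.
Proof.
move=> ar cr fr gr ur ha hab hd hM v vn0 hv.
set F := \row_k f k; set G := \row_k g k; set U := \row_k u k.
set D := \row_k d k.
have eM : M = a *: (F^T *m F) + b *: (G^T *m G) + c *: (F^T *m G + G^T *m F)
              + 2 *: (U^T *m U) + diag_mx D.
  apply/matrixP => k l; rewrite hM !mxE !big_ord1 !mxE.
  by rewrite [((k == l)%:R) * _]mulr_natl.
have Fr : forall k, F 0 k \is Num.real by move=> k; rewrite mxE.
have Gr : forall k, G 0 k \is Num.real by move=> k; rewrite mxE.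
have Ur : forall k, U 0 k \is Num.real by move=> k; rewrite mxE.
rewrite eM !qfD !qfZ qfD !qfJ qfdiag !(real_conj v Fr) !(real_conj v Gr).
rewrite !(real_conj v Ur).
set S := (v *m F^T) 0 0; set T := (v *m G^T) 0 0; set Z := (v *m U^T) 0 0.
have hc : a * S + c * T = 0.
  rewrite -hv /S /T !mxE 2!mulr_sumr -big_split /=; apply: eq_bigr => k _.
  rewrite !mxE; ring.
have ca : a^* = a := conj_Creal ar.
have cc : c^* = c := conj_Creal cr.
have Q0 : 0 <= a * (S * S^*) + b * (T * T^*) + c * (S * T^* + T * S^*).
  rewrite -(nmulr_rle0 _ ha).
  have -> : a * (a * (S * S^*) + b * (T * T^*) + c * (S * T^* + T * S^*))
      = (a * S) * (a * S)^* + a * b * (T * T^*)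
        + c * ((a * S) * T^* + T * (a * S)^*).
    by rewrite rmorphM /= ca; ring.
  have aS : a * S = - (c * T) by apply/eqP; rewrite -subr_eq0 opprK hc.
  rewrite aS rmorphN rmorphM /= cc.
  have -> : - (c * T) * - (c * T^*) + a * b * (T * T^*) +
      c * (- (c * T) * T^* + T * - (c * T^*)) = (a * b - c ^+ 2) * (T * T^*).
    by ring.
  by apply: mulr_le0_ge0; [rewrite subr_le0 | apply: mul_conjC_ge0].
apply: ltr_wpDl.
  by apply: addr_ge0 => //; apply: mulr_ge0; [rewrite ler0n | apply: mul_conjC_ge0].
have [k0 hk0] : exists k0, v 0 k0 != 0.
  case: (pickP (fun k => v 0 k != 0)) => [k0 hk0|h]; first by exists k0.
  exfalso; move/negP: vn0; apply; apply/eqP/matrixP => i j.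
  by rewrite ord1 mxE; have := h j => /= /negbFE /eqP.
rewrite (bigD1 k0) //=; apply: ltr_pwDl.
  by apply: mulr_gt0; [rewrite mxE | rewrite mul_conjC_gt0].
apply: sumr_ge0 => k _; apply: mulr_ge0; first by rewrite mxE ltW.
exact: mul_conjC_ge0.
Qed.

End Sec5.


Section Entries.
Variables (R : realFieldType) (m n : nat) (e : {set 'I_(m + n)}).
Definition fR (k : 'I_(m + n)) : R := (in_V1 k)%:R.
Definition gR (k : 'I_(m + n)) : R := (~~ in_V1 k)%:R.
Definition uR (k : 'I_(m + n)) : R := (k \in e)%:R.
Definition a1 : R := 1 - 2 * n%:R.
Definition b1 : R := 1 - 2 * m%:R.
Definition c1 : R := 5 - 2 * (m%:R + n%:R).
Definition dR k : R := - (a1 * fR k + b1 * gR k + 2 * uR k).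

Lemma seidel_entry k l : (3 <= m)%N -> e \in C3 m n ->
  seidel R (C3 m n :\ e) k l = a1 * (fR k * fR l) + b1 * (gR k * gR l)
     + c1 * (fR k * gR l + gR k * fR l) + 2 * (uR k * uR l) + (k == l)%:R * dR k.
Proof.
move=> hm he; rewrite /seidel mxE /dR /a1 /b1 /c1 /fR /gR /uR.
have [<-|kl] := eqVneq k l.
  by case: (in_V1 k); case: (k \in e) => /=; ring.
have hc := codeg_eq he kl.
have -> : ((codeg (C3 m n :\ e) k l)%:R : R)
    = (base k l)%:R - ((k \in e) && (l \in e))%:R by rewrite -hc natrD addrK.
rewrite /base.
have h2 : ((m + n - 2)%:R : R) = m%:R + n%:R - 2.
  by rewrite natrB ?natrD //; lia.
by case: (in_V1 k); case: (in_V1 l); case: (k \in e); case: (l \in e);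
  rewrite /= ?h2; ring.
Qed.

Lemma dR_pos k : (3 <= m)%N -> (3 <= n)%N -> 0 < dR k.
Proof.
move=> hm hn; have hm' : (3 : R) <= m%:R by rewrite (ler_nat R 3 m).
have hn' : (3 : R) <= n%:R by rewrite (ler_nat R 3 n).
rewrite /dR /a1 /b1 /fR /gR /uR.
by case: (in_V1 k); case: (k \in e) => /=; lra.
Qed.

Lemma a1_neg : (3 <= n)%N -> a1 < 0.
Proof. move=> hn; have hn' : (3 : R) <= n%:R by rewrite (ler_nat R 3 n).
rewrite /a1; lra. Qed.

Lemma ab_le : (3 <= m)%N -> (3 <= n)%N -> a1 * b1 <= c1 ^+ 2.
Proof.
move=> hm hn; have hm' : (3 : R) <= m%:R by rewrite (ler_nat R 3 m).
have hn' : (3 : R) <= n%:R by rewrite (ler_nat R 3 n).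
rewrite /a1 /b1 /c1; nra.
Qed.
End Entries.


Theorem lemma2p10 (R : rcfType) (m n : nat) (e : {set 'I_(m + n)}) :
  (3 <= m)%N -> (3 <= n)%N -> e \in C3 m n ->
  exists lam : 'I_(m + n) -> R,
    char_poly (seidel R (C3 m n :\ e)) = \prod_(i < m + n) ('X - (lam i)%:P) /\
    exists i0 : 'I_(m + n), lam i0 < 0 /\ (forall i, i != i0 -> 0 < lam i).
Proof.
move=> hm hn he.
set A := seidel R (C3 m n :\ e).
set Ac : 'M[R[i]]_(m + n) := map_mx (real_complex R) A.
have realC : forall x : R, (real_complex R) x \is Num.real.
  by move=> x; apply/complex_realP; exists x.
have Asym : forall k l, A k l = A l k.
  move=> k l; rewrite /A /seidel !mxE eq_sym; congr (if _ then _ else _).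
  have -> // : codeg (C3 m n :\ e) k l = codeg (C3 m n :\ e) l k.
  by rewrite /codeg; apply: eq_card => f; rewrite !inE [(k \in f) && _]andbC.
have herm : Ac \is hermsymmx.
  apply/is_hermitianmxP; rewrite expr0 scale1r; apply/matrixP => k l.
  rewrite !mxE conj_Creal ?realC //; congr (real_complex R).
  by have := Asym k l; rewrite /A /seidel !mxE.
have trA : \tr Ac = 0.
  by rewrite /mxtrace big1 // => k _; rewrite !mxE eqxx rmorph0.
have N1 : (1 < m + n)%N by rewrite (leq_trans _ (leq_addr _ _)) // (leq_trans _ hm).
have := @sp_one_neg _ _ Ac
  (\row_k ((real_complex R) (a1 R n) * (real_complex R) (fR R k) + (real_complex R) (c1 R m n) * (real_complex R) (gR R k))) N1 herm trA.
case.
  move=> v vn0 hv; apply: (@qf_pos _ _ Ac (fun k => (real_complex R) (fR R k)) (fun k => (real_complex R) (gR R k))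
     (fun k => (real_complex R) (uR R e k)) (fun k => (real_complex R) (dR R e k)) ((real_complex R) (a1 R n)) ((real_complex R) (b1 R m))
     ((real_complex R) (c1 R m n))) => //.
  - by rewrite -(rmorph0 (real_complex R)) ltcR a1_neg.
  - by rewrite -rmorphM -rmorphXn lecR ab_le.
  - by move=> k; rewrite -(rmorph0 (real_complex R)) ltcR dR_pos.
  - move=> k l; rewrite mxE seidel_entry //.
    by rewrite !(rmorphD, rmorphM, rmorph_nat).
move=> i0 [hi0 hpos].
set D := spectral_diag Ac.
have Dreal : forall i, D 0 i \is Num.real.
  by move=> i; have /mxOverP := hermitian_spectral_diag_real herm; apply.
have eD : forall i, (real_complex R) (complex.Re (D 0 i)) = D 0 i.
  by move=> i; apply: RRe_real.
exists (fun i => complex.Re (D 0 i)); split.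
  apply: (map_poly_inj (real_complex R)); rewrite map_char_poly.
  have eAc : Ac = invmx (spectralmx Ac) *m diag_mx D *m spectralmx Ac.
    by apply/orthomx_spectralP/hermitian_normalmx.
  rewrite -/Ac eAc char_poly_similar ?spectral_unit //.
  rewrite char_poly_trig ?diag_mx_is_trig // rmorph_prod; apply: eq_bigr => i _.
  by rewrite rmorphB /= map_polyX map_polyC /= eD !mxE eqxx mulr1n.
exists i0; split.
  by rewrite -ltcR eD rmorph0.
by move=> i /hpos; rewrite -ltcR eD rmorph0.
Qed.
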